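(* Assume the Continuum Hypothesis. If $\emptyset\neq U\subseteq\mathbb{R}$ and $\mathbb{R}\setminus U$ is uncountable, then there is a two-point selection $f$ on $\mathbb{R}$ such that $U\notin\tau_f$.
   Context: A two-point selection on $\mathbb{R}$ is a function $f$ from the set of two-element subsets of $\mathbb{R}$ to $\mathbb{R}$ with $f(F)\in F$. Write $r<_f s$ if $f(\{r,s\})=r$ ($r\ne s$), $(\leftarrow,r)_f=\{x: x<_f r\}$, $(r,\rightarrow)_f=\{x: r<_f x\}$. The topology $\tau_f$ on $\mathbb{R}$ is generated (as a subbase) by all sets $(\leftarrow,r)_f$, $(r,\rightarrow)_f$, $r\in\mathbb{R}$. *)

(* Defs.v *)
From mathcomp Require Import all_boot all_order all_algebra.
From mathcomp Require Import all_classical all_reals.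
Set Implicit Arguments. Unset Strict Implicit. Unset Printing Implicit Defensive.
Local Open Scope classical_set_scope.

(* We work over an arbitrary real number type R (all realTypes are
   isomorphic to the reals). *)

Definition CH (R : realType) : Prop :=
  forall A : set R, ~ countable A -> (A #= [set: R])%card.

(* A two-point selection on R, represented as a binary function f with
   f {r,s} := f r s; only the values on pairs of distinct points matter. *)
Definition two_point_selection (R : realType) (f : R -> R -> R) : Prop :=
  forall r s : R, r <> s -> f r s = f s r /\ (f r s = r \/ f r s = s).

Definition lt_f (R : realType) (f : R -> R -> R) (r s : R) : Prop :=
  r <> s /\ f r s = r.

Definition ray_left (R : realType) (f : R -> R -> R) (r : R) : set R :=
  [set x | lt_f f x r].
Definition ray_right (R : realType) (f : R -> R -> R) (r : R) : set R :=
  [set x | lt_f f r x].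

Definition subbase_set (R : realType) (f : R -> R -> R) (r : R) (b : bool) :
  set R := if b then ray_left f r else ray_right f r.

(* U is open in tau_f, the topology generated by the subbase of all rays:
   every point of U lies in a finite intersection of subbase sets contained
   in U (the empty intersection being all of R). *)
Definition tau_f_open (R : realType) (f : R -> R -> R) (U : set R) : Prop :=
  forall x, U x ->
    exists (n : nat) (r : 'I_n -> R) (b : 'I_n -> bool),
      (forall i, subbase_set f (r i) (b i) x) /\
      (forall y, (forall i, subbase_set f (r i) (b i) y) -> U y).

(* Main.v *)
Require Import Defs.
From mathcomp Require Import all_boot all_order all_algebra.
From mathcomp Require Import all_classical all_reals.
Import Order.TTheory GRing.Theory Num.Theory.
Local Open Scope classical_set_scope.

Lemma inj_nat (R : realType) (U : set R) : ~ countable (~` U) ->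
  exists g : nat -> R, (forall n, ~ U (g n)) /\ (forall n m, g n = g m -> n = m).
Proof.
move=> hc.
have hinf : infinite_set (~` U) by move=> /finite_set_countable.
have h1 : ([set: nat] #<= (~` U))%card by apply/infiniteP.
have [f] := card_leP h1.
pose g n := val (f (SigSub (in_setT n))).
exists g; split; first by move=> n; have /set_mem := valP (f (SigSub (in_setT n))).
move=> n m /val_inj/(@inj _ _ _ f) h.
have := h (in_setT _) (in_setT _).
by case.
Qed.

Section Constr.
Set Implicit Arguments.
Local Open Scope ring_scope.
Variables (R : realType) (x0 : R) (g : nat -> R).
Hypothesis ginj : forall n m, g n = g m -> n = m.
Hypothesis x0D : forall n, g n <> x0.

Definition inD (y : R) := exists m, g m = y.
Definition idx (y : R) : nat :=
  match pselect (inD y) with left h => projT1 (cid h) | right _ => 0%N end.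
Definition ee (y : R) := if pselect (inD y) then x0 else y.
Definition kk (y : R) : R := if pselect (inD y) then ((idx y).+1%:R)^-1 else 0.
Definition less (a b : R) := ee a < ee b \/ (ee a = ee b /\ kk a < kk b).
Definition ff (a b : R) := if pselect (less a b) then a else b.

Lemma idxE n : idx (g n) = n.
Proof.
rewrite /idx; case: pselect => [h|[]]; last by exists n.
by case: (cid h) => m /= /ginj.
Qed.

Lemma idx_spec y : inD y -> g (idx y) = y.
Proof. by case=> m <-; rewrite idxE. Qed.

Lemma eeD n : ee (g n) = x0.
Proof. by rewrite /ee; case: pselect => // -[]; exists n. Qed.
Lemma kkD n : kk (g n) = (n.+1%:R)^-1.
Proof. by rewrite /kk; case: pselect => [h|[]]; [rewrite idxE | exists n]. Qed.
Lemma notD0 : ~ inD x0.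
Proof. by case=> m /x0D. Qed.
Lemma ee0 : ee x0 = x0.
Proof. by rewrite /ee; case: pselect => // h; case: (notD0 h). Qed.
Lemma kk0 : kk x0 = 0.
Proof. by rewrite /kk; case: pselect => // h; case: (notD0 h). Qed.
Lemma kk_ge0 y : 0 <= kk y.
Proof. by rewrite /kk; case: pselect => h //; rewrite invr_ge0 ler0n. Qed.

Lemma less_irr a : ~ less a a.
Proof. by rewrite /less !ltxx => -[|[]]. Qed.

Lemma less_asym a b : less a b -> ~ less b a.
Proof.
rewrite /less => h1 h2; case: h1 => [h1|[e1 h1]]; case: h2 => [h2|[e2 h2]].
- by have := lt_trans h1 h2; rewrite ltxx.
- by move: h1; rewrite e2 ltxx.
- by move: h2; rewrite e1 ltxx.
- by have := lt_trans h1 h2; rewrite ltxx.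
Qed.

Lemma eekk_inj a b : ee a = ee b -> kk a = kk b -> a = b.
Proof.
rewrite /ee /kk; case: pselect => ha; case: pselect => hb //=.
- move=> _ /(congr1 (fun x => x^-1)); rewrite !invrK => /eqP.
  rewrite eqr_nat eqSS => /eqP hi.
  by rewrite -(idx_spec ha) -(idx_spec hb) hi.
- by move=> <- /eqP; rewrite invr_eq0 pnatr_eq0.
- by move=> -> /eqP; rewrite eq_sym invr_eq0 pnatr_eq0.
Qed.

Lemma less_total a b : a <> b -> less a b \/ less b a.
Proof.
move=> nab; rewrite /less.
case: (ltgtP (ee a) (ee b)) => [h|h|h]; [by left; left|by right; left|].
case: (ltgtP (kk a) (kk b)) => [h'|h'|h']; [by left; right|by right; right|].
by case: nab; apply: eekk_inj.
Qed.

Lemma ff_sel : two_point_selection ff.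
Proof.
move=> r s nrs; rewrite /ff.
case: pselect => h1; case: pselect => h2.
- by case: (less_asym h1 h2).
- by split=> //; left.
- by split=> //; right.
- by case: (less_total nrs).
Qed.

Lemma lt_ffE a b : lt_f ff a b <-> less a b.
Proof.
rewrite /lt_f /ff; split.
- by case=> nab; case: pselect => // _ /esym.
- move=> h; split; first by move=> eab; subst; apply: (less_irr h).
  by case: pselect.
Qed.

Lemma key N r : r <> g N -> (inD r -> (idx r < N)%N) ->
  (less x0 r -> less (g N) r) /\ (less r x0 -> less r (g N)).
Proof.
move=> rN hi; rewrite /less eeD ee0 kk0 kkD; split.
- case=> [h|[e1 h]]; first by left.
  right; split=> //.
  move: h; rewrite /kk; case: pselect => hr; last by rewrite ltxx.
  move=> _; rewrite ltf_pV2 ?posrE ?ltr0n // ltr_nat ltnS; exact: hi.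
- case=> [h|[e1 h]]; first by left.
  by move: h; rewrite ltNge kk_ge0.
Qed.
End Constr.
Unset Implicit Arguments.

Theorem corollary3p13 (R : realType) (hCH : CH R) (U : set R) :
  U !=set0 -> ~ countable (~` U) ->
  exists f : R -> R -> R, two_point_selection f /\ ~ tau_f_open f U.
Proof.
move=> [x0 Ux0] hc.
have [g [gU ginj]] := @inj_nat R U hc.
have x0D : forall n, g n <> x0 by move=> n e; apply: (gU n); rewrite e.
exists (@ff R x0 g); split; first exact: ff_sel.
move=> /(_ x0 Ux0) [n [r [b [hx hU]]]].
pose N := (\max_(i < n) idx R g (r i)).+1.
apply: (gU N); apply: hU => i.
have hi : (idx R g (r i) < N)%N by rewrite ltnS (leq_bigmax i).
have rN : r i <> g N.
  by move=> e; move: hi; rewrite e (@idxE R g ginj) ltnn.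
have [k1 k2] := @key R x0 g ginj x0D N (r i) rN (fun _ => hi).
move: (hx i); rewrite /subbase_set /ray_left /ray_right /=.
by case: (b i) => /= /lt_ffE h; apply/lt_ffE; [apply: k1|apply: k2].
Qed.
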